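(* Let $b$ be a $\kappa$--contracting geodesic ray in a proper CAT(0) space $X$, and let $m_b$ be the function provided by the Strongly Morse theorem applied to $Z=b$. Then for every $(q,Q)$--quasi-geodesic ray $\beta$ that $\kappa$--fellow travels $b$, we have $\beta\subset\mathcal N_\kappa(b,m_b(q,Q))$ and $b\subset\mathcal N_\kappa(\beta,2m_b(q,Q))$.
   Context: $\|x\|=d_X(\mathfrak o,x)$; $\kappa:[0,\infty)\to[1,\infty)$ monotone increasing, concave, sublinear; $\kappa(x):=\kappa(\|x\|)$; $\mathcal N_\kappa(Z,n)=\{x:d_X(x,Z)\le n\kappa(x)\}$. Quasi-geodesic rays are continuous quasi-isometric embeddings of $[0,\infty)$ starting at $\mathfrak o$; two rays $\kappa$--fellow travel if each lies in some $(\kappa,n)$--neighbourhood of the other. $Z$ is $\kappa$--contracting if there is $c_Z$ with $\operatorname{diam}(x_Z\cup y_Z)\le c_Z\kappa(x)$ whenever $d_X(x,y)\le d_X(x,Z)$. The Strongly Morse theorem: for a closed $\kappa$--contracting $Z\ni\mathfrak o$ there is $m_Z:\mathbb R^2\to\mathbb R$ such that for all $r,n>0$ and sublinear $\kappa'$ there is $R>0$ so that for every $(q,Q)$--quasi-geodesic ray $\eta$ with $m_Z(q,Q)\le r/(2\kappa(r))$, if $t_r,t_R$ are the first times with $\|\eta(t_r)\|=r$, $\|\eta(t_R)\|=R$ and $d_X(\eta(t_R),Z)\le n\kappa'(R)$, then $\eta([0,t_r])\subset\mathcal N_\kappa(Z,m_Z(q,Q))$. *)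

(* Defs.v *)
From Stdlib Require Import Reals Lra ClassicalEpsilon.
Open Scope R_scope.

Section Defs.
Context {X : Type} (d : X -> X -> R).

Definition is_metric : Prop :=
  (forall x y, 0 <= d x y) /\ (forall x y, d x y = 0 <-> x = y) /\
  (forall x y, d x y = d y x) /\ (forall x y z, d x z <= d x y + d y z).

(** Proper: closed balls are compact (sequentially, equivalent in metric
    spaces): every sequence in a closed ball has a subsequence converging
    to a point of that ball. *)
Definition is_proper : Prop :=
  forall (c : X) (r : R) (u : nat -> X), (forall n, d c (u n) <= r) ->
  exists (phi : nat -> nat) (x : X),
    (forall n, (phi n < phi (S n))%nat) /\ d c x <= r /\
    (forall eps, eps > 0 -> exists N, forall n, (n >= N)%nat -> d (u (phi n)) x < eps).

Definition geodesic_seg (gamma : R -> X) (a b : X) : Prop :=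
  gamma 0 = a /\ gamma (d a b) = b /\
  forall s t, 0 <= s <= d a b -> 0 <= t <= d a b ->
    d (gamma s) (gamma t) = Rabs (s - t).

Definition is_geodesic_space : Prop :=
  forall a b, exists gamma, geodesic_seg gamma a b.

End Defs.

Definition eucl (P Q : R * R) : R :=
  sqrt ((fst P - fst Q) ^ 2 + (snd P - snd Q) ^ 2).

Definition interp (A B : R * R) (s : R) : R * R :=
  (fst A + s * (fst B - fst A), snd A + s * (snd B - snd A)).

Section CAT0.
Context {X : Type} (d : X -> X -> R).

(** x is a point of the side [gamma] (from a to b) of a geodesic triangle,
    and xb is its comparison point on the side [A,B] of the comparison
    triangle. *)
Definition side_point (gamma : R -> X) (a b : X) (A B : R * R)
    (x : X) (xb : R * R) : Prop :=
  exists t, 0 <= t <= d a b /\ x = gamma t /\ xb = interp A B (t / d a b).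

Definition is_CAT0 : Prop :=
  is_geodesic_space d /\
  forall (p q r : X) (g1 g2 g3 : R -> X) (P Q Rr : R * R),
    geodesic_seg d g1 p q -> geodesic_seg d g2 q r -> geodesic_seg d g3 r p ->
    eucl P Q = d p q -> eucl Q Rr = d q r -> eucl Rr P = d r p ->
    forall x xb y yb,
      (side_point g1 p q P Q x xb \/ side_point g2 q r Q Rr x xb \/
       side_point g3 r p Rr P x xb) ->
      (side_point g1 p q P Q y yb \/ side_point g2 q r Q Rr y yb \/
       side_point g3 r p Rr P y yb) ->
      d x y <= eucl xb yb.
End CAT0.

Definition sublinear_fun (kappa : R -> R) : Prop :=
  (forall t, 0 <= t -> 1 <= kappa t) /\
  (forall s t, 0 <= s -> s <= t -> kappa s <= kappa t) /\
  (forall s t l, 0 <= s -> 0 <= t -> 0 <= l <= 1 ->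
     l * kappa s + (1 - l) * kappa t <= kappa (l * s + (1 - l) * t)) /\
  (forall eps, eps > 0 -> exists T, forall t, t >= T -> kappa t <= eps * t).

Definition is_glb (E : R -> Prop) (m : R) : Prop :=
  (forall x, E x -> m <= x) /\ (forall m', (forall x, E x -> m' <= x) -> m' <= m).

Section Geom.
Context {X : Type} (d : X -> X -> R) (o : X) (kappa : R -> R).

(** d(x, Z) = inf_{z in Z} d(x, z) (meaningful for nonempty Z). *)
Definition dist_set (Z : X -> Prop) (x : X) : R :=
  epsilon (inhabits 0) (is_glb (fun r => exists z, Z z /\ r = d x z)).

(** ||x|| = d(o, x), and kappa(x) := kappa(||x||). *)
Definition nrm (x : X) : R := d o x.

Definition kappa_nbhd (Z : X -> Prop) (n : R) (x : X) : Prop :=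
  dist_set Z x <= n * kappa (nrm x).

Definition subset (A B : X -> Prop) : Prop := forall x, A x -> B x.

Definition proj (Z : X -> Prop) (x : X) (z : X) : Prop :=
  Z z /\ d x z = dist_set Z x.

Definition kappa_contracting (Z : X -> Prop) : Prop :=
  exists cZ : R, forall x y, d x y <= dist_set Z x ->
    forall a b, (proj Z x a \/ proj Z y a) -> (proj Z x b \/ proj Z y b) ->
      d a b <= cZ * kappa (nrm x).

Definition geodesic_ray (b : R -> X) : Prop :=
  b 0 = o /\ forall s t, 0 <= s -> 0 <= t -> d (b s) (b t) = Rabs (s - t).

Definition quasi_geodesic_ray (q Q : R) (eta : R -> X) : Prop :=
  eta 0 = o /\
  (forall t, 0 <= t -> forall eps, eps > 0 -> exists del, del > 0 /\
     forall s, 0 <= s -> Rabs (s - t) < del -> d (eta s) (eta t) < eps) /\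
  (forall s t, 0 <= s -> 0 <= t ->
     / q * Rabs (s - t) - Q <= d (eta s) (eta t) /\
     d (eta s) (eta t) <= q * Rabs (s - t) + Q).

Definition ray_image (g : R -> X) (x : X) : Prop := exists t, 0 <= t /\ x = g t.

Definition seg_image (g : R -> X) (T : R) (x : X) : Prop :=
  exists t, 0 <= t <= T /\ x = g t.

Definition kappa_fellow_travel (g1 g2 : R -> X) : Prop :=
  (exists n, subset (ray_image g1) (kappa_nbhd (ray_image g2) n)) /\
  (exists n, subset (ray_image g2) (kappa_nbhd (ray_image g1) n)).

Definition first_time (eta : R -> X) (r t : R) : Prop :=
  0 <= t /\ nrm (eta t) = r /\ forall s, 0 <= s < t -> nrm (eta s) <> r.

(** The conclusion of the Strongly Morse theorem for Z and m = m_Z. *)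
Definition strongly_morse (Z : X -> Prop) (m : R -> R -> R) : Prop :=
  forall r n, r > 0 -> n > 0 -> forall kappa' : R -> R, sublinear_fun kappa' ->
  exists Rr, Rr > 0 /\
    forall q Q (eta : R -> X), 1 <= q -> 0 <= Q -> quasi_geodesic_ray q Q eta ->
      m q Q <= r / (2 * kappa r) ->
      forall tr tR, first_time eta r tr -> first_time eta Rr tR ->
        dist_set Z (eta tR) <= n * kappa' Rr ->
        subset (seg_image eta tr) (kappa_nbhd Z (m q Q)).
End Geom.

(* Main.v *)
Require Import Defs.
From Stdlib Require Import Reals Lra Classical ClassicalEpsilon.
Open Scope R_scope.

Section Aux.
Context {X : Type} (d : X -> X -> R) (Hmet : is_metric d).

Lemma glb_exists (E : R -> Prop) : (exists x, E x) -> (forall x, E x -> 0 <= x) ->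
  exists m, is_glb E m.
Proof.
  intros [x0 Hx0] Hlb.
  destruct (completeness (fun y => E (- y))) as [L [HL1 HL2]].
  - exists 0. unfold is_upper_bound. intros y Hy. specialize (Hlb _ Hy). lra.
  - exists (- x0). rewrite Ropp_involutive. exact Hx0.
  - unfold is_upper_bound in *. exists (- L). split.
    + intros x Hx. specialize (HL1 (- x)). rewrite Ropp_involutive in HL1.
      specialize (HL1 Hx). lra.
    + intros m' Hm'. assert (L <= - m').
      { apply HL2. intros y Hy. specialize (Hm' _ Hy). lra. } lra.
Qed.

Lemma dist_glb (Z : X -> Prop) x z0 : Z z0 ->
  is_glb (fun r => exists z, Z z /\ r = d x z) (dist_set d Z x).
Proof.
  intros Hz0. unfold dist_set. apply epsilon_spec.
  apply glb_exists. exists (d x z0); eauto.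
  intros r [z [_ ->]]. apply (proj1 Hmet).
Qed.

Lemma dist_le Z x z : Z z -> dist_set d Z x <= d x z.
Proof. intros Hz. destruct (dist_glb Z x z Hz) as [H1 _]. apply H1. eauto. Qed.

Lemma dist_approx Z x z0 eps : Z z0 -> eps > 0 ->
  exists z, Z z /\ d x z < dist_set d Z x + eps.
Proof.
  intros Hz0 He. destruct (dist_glb Z x z0 Hz0) as [_ H2].
  apply NNPP. intros Hn.
  assert (dist_set d Z x + eps <= dist_set d Z x).
  { apply H2. intros r [z [Hz ->]].
    apply Rnot_lt_le. intros Hlt. apply Hn. eauto. }
  lra.
Qed.

Lemma nrm_diff o x y : Rabs (nrm d o x - nrm d o y) <= d x y.
Proof.
  destruct Hmet as [_ [_ [Hsym Htri]]]. unfold nrm.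
  pose proof (Htri o y x) as H1. pose proof (Htri o x y) as H2.
  rewrite (Hsym y x) in H1. apply Rabs_le. lra.
Qed.

Lemma first_time_ex o q Q eta r : 1 <= q -> 0 <= Q -> quasi_geodesic_ray d o q Q eta -> r > 0 ->
  exists t, first_time d o eta r t.
Proof.
  intros Hq HQ [H0 [Hc Hqi]] Hr.
  assert (Hn0 : nrm d o (eta 0) = 0).
  { unfold nrm. rewrite H0. apply (proj1 (proj2 Hmet)). reflexivity. }
  set (T := q * (r + Q)).
  assert (HT0 : 0 <= T) by (unfold T; nra).
  assert (HnT : r <= nrm d o (eta T)).
  { unfold nrm. rewrite <- H0. destruct (Hqi 0 T (Rle_refl 0) HT0) as [Hl _].
    replace (Rabs (0 - T)) with T in Hl
      by (rewrite Rabs_minus_sym, Rminus_0_r, Rabs_pos_eq; lra).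
    replace (/ q * T) with (r + Q) in Hl by (unfold T; field; lra). lra. }
  set (S := fun t => 0 <= t /\ forall s, 0 <= s <= t -> nrm d o (eta s) < r).
  assert (HS0 : S 0).
  { split; [lra|]. intros s Hs. replace s with 0 by lra. lra. }
  assert (HSb : bound S).
  { exists T. unfold is_upper_bound. intros t [Ht Hall].
    destruct (Rle_lt_dec t T); [lra|].
    specialize (Hall T ltac:(lra)). lra. }
  destruct (completeness S HSb (ex_intro _ 0 HS0)) as [c [Hc1 Hc2]].
  unfold is_upper_bound in *.
  assert (Hc0 : 0 <= c) by (apply Hc1; exact HS0).
  assert (Hbelow : forall s, 0 <= s < c -> nrm d o (eta s) < r).
  { intros s Hs. apply NNPP; intro Hns.
    assert (c <= s).
    { apply Hc2. intros t [Ht Hall]. destruct (Rle_lt_dec t s); [lra|].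
      exfalso. apply Hns. apply Hall. lra. }
    lra. }
  assert (Hcont : forall eps, eps > 0 -> exists del, del > 0 /\
     forall s, 0 <= s -> Rabs (s - c) < del ->
       Rabs (nrm d o (eta s) - nrm d o (eta c)) < eps).
  { intros eps He. destruct (Hc c Hc0 eps He) as [del [Hd Hs]].
    exists del. split; auto.
    intros s Hs0 Hsd. eapply Rle_lt_trans. apply nrm_diff. apply Hs; auto. }
  exists c. split; [exact Hc0|]. split.
  2:{ intros s Hs. specialize (Hbelow s Hs). lra. }
  destruct (Rtotal_order (nrm d o (eta c)) r) as [Hlt|[Heq|Hgt]];
    [exfalso| exact Heq | exfalso].
  - destruct (Hcont (r - nrm d o (eta c))) as [del [Hd Hs]]; [lra|].
    assert (HS : S (c + del/2)).
    { split; [lra|]. intros s Hs'.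
      destruct (Rlt_le_dec s c). { apply Hbelow; lra. }
      assert (Habs : Rabs (s - c) < del) by (rewrite Rabs_pos_eq; lra).
      specialize (Hs s ltac:(lra) Habs). apply Rabs_def2 in Hs. lra. }
    specialize (Hc1 _ HS). lra.
  - destruct (Req_dec c 0) as [Hc00|Hc00].
    { rewrite Hc00 in Hgt. lra. }
    destruct (Hcont (nrm d o (eta c) - r)) as [del [Hd Hs]]; [lra|].
    pose (s0 := Rmax (c/2) (c - del/2)).
    assert (Hm1 : c/2 <= s0) by apply Rmax_l.
    assert (Hm2 : c - del/2 <= s0) by apply Rmax_r.
    assert (s0 < c).
    { unfold s0. apply Rmax_lub_lt; lra. }
    assert (Habs : Rabs (s0 - c) < del).
    { rewrite Rabs_minus_sym, Rabs_pos_eq; lra. }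
    specialize (Hs s0 ltac:(lra) Habs). apply Rabs_def2 in Hs.
    specialize (Hbelow s0 ltac:(lra)). lra.
Qed.

End Aux.

Theorem corollary3p12 (X : Type) (d : X -> X -> R) (o : X) (kappa : R -> R)
  (Hmet : is_metric d) (Hprop : is_proper d) (Hcat : is_CAT0 d)
  (Hkappa : sublinear_fun kappa)
  (b : R -> X) (Hb : geodesic_ray d o b)
  (Hcontr : kappa_contracting d o kappa (ray_image b))
  (mb : R -> R -> R) (Hmb : strongly_morse d o kappa (ray_image b) mb)
  (q Q : R) (Hq : 1 <= q) (HQ : 0 <= Q) (beta : R -> X)
  (Hbeta : quasi_geodesic_ray d o q Q beta)
  (Hft : kappa_fellow_travel d o kappa beta b) :
  subset (ray_image beta) (kappa_nbhd d o kappa (ray_image b) (mb q Q)) /\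
  subset (ray_image b) (kappa_nbhd d o kappa (ray_image beta) (2 * mb q Q)).
Proof.
  pose proof Hkappa as Hk. destruct Hk as [Hk1 [Hkmon [_ Hksub]]].
  destruct Hft as [[n Hn] _].
  assert (Hb0 : ray_image b o).
  { exists 0. split; [lra|]. symmetry; apply Hb. }
  assert (Hnb : forall u, 0 <= u -> nrm d o (b u) = u).
  { intros u Hu. unfold nrm. destruct Hb as [Hb0' Hbd]. rewrite <- Hb0'.
    rewrite Hbd by lra. rewrite Rminus_0_l, Rabs_Ropp, Rabs_pos_eq; lra. }
  assert (P1 : subset (ray_image beta) (kappa_nbhd d o kappa (ray_image b) (mb q Q))).
  { intros x [t0 [Ht0 ->]].
    set (n' := Rmax n 1).
    pose proof (Rmax_l n 1). pose proof (Rmax_r n 1).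
    set (a := Rabs (mb q Q) + 1).
    assert (Ha : a > 0) by (unfold a; pose proof (Rabs_pos (mb q Q)); lra).
    destruct (Hksub (/ (2 * a))) as [T HT].
    { apply Rlt_gt, Rinv_0_lt_compat. lra. }
    pose proof (Rmax_l T 1). pose proof (Rmax_r T 1).
    pose (r := Rmax (Rmax T 1) (q * t0 + Q + 1)).
    assert (Hr_a : Rmax T 1 <= r) by apply Rmax_l.
    assert (Hr_b : q * t0 + Q + 1 <= r) by apply Rmax_r.
    clearbody r.
    assert (Hr1 : 1 <= r) by lra.
    assert (Hkr := HT r ltac:(lra)).
    assert (Hkr1 := Hk1 r ltac:(lra)).
    assert (H2ak : 2 * a * kappa r <= r).
    { apply Rmult_le_compat_l with (r := 2 * a) in Hkr; [|lra].
      replace (2 * a * (/ (2 * a) * r)) with r in Hkr by (field; lra). lra. }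
    assert (Hmr : mb q Q <= r / (2 * kappa r)).
    { apply Rle_trans with a.
      { unfold a. pose proof (Rle_abs (mb q Q)). lra. }
      apply Rmult_le_reg_r with (2 * kappa r); [lra|].
      unfold Rdiv. rewrite Rmult_assoc, Rinv_l by lra. lra. }
    destruct (first_time_ex d Hmet o q Q beta r Hq HQ Hbeta ltac:(lra)) as [tr Htr].
    assert (Htr0 : t0 <= tr).
    { destruct (Rle_lt_dec t0 tr) as [|Hlt]; [assumption|exfalso].
      destruct Htr as [Htr0 [Hntr _]]. unfold nrm in Hntr.
      destruct Hbeta as [Hbe0 [_ Hqi]].
      destruct (Hqi 0 tr (Rle_refl 0) Htr0) as [_ Hu].
      rewrite Hbe0 in Hu. rewrite Hntr in Hu.
      rewrite Rabs_minus_sym, Rminus_0_r, Rabs_pos_eq in Hu by lra.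
      nra. }
    destruct (Hmb r n' ltac:(lra) ltac:(unfold n'; lra) kappa Hkappa) as [Rr [HRr Hconc]].
    destruct (first_time_ex d Hmet o q Q beta Rr Hq HQ Hbeta HRr) as [tR HtR].
    assert (Hdist : dist_set d (ray_image b) (beta tR) <= n' * kappa Rr).
    { destruct HtR as [HtR0 [HntR _]].
      assert (Hx : ray_image beta (beta tR)) by (exists tR; split; auto).
      specialize (Hn _ Hx). unfold kappa_nbhd in Hn. rewrite HntR in Hn.
      assert (Hk := Hk1 Rr ltac:(lra)).
      apply Rle_trans with (n * kappa Rr); [exact Hn|].
      apply Rmult_le_compat_r; unfold n'; lra. }
    apply (Hconc q Q beta Hq HQ Hbeta Hmr tr tR Htr HtR Hdist).
    exists t0. split; [lra|reflexivity]. }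
  split; [exact P1|].
  intros x [s [Hs ->]].
  assert (Ht : exists t, 0 <= t /\ nrm d o (beta t) = s).
  { destruct (Req_dec s 0) as [->|Hs0].
    { exists 0. split; [lra|]. unfold nrm. rewrite (proj1 Hbeta).
      apply (proj1 (proj2 Hmet)); reflexivity. }
    destruct (first_time_ex d Hmet o q Q beta s Hq HQ Hbeta ltac:(lra))
      as [t [Ht1 [Ht2 _]]].
    eauto. }
  destruct Ht as [t [Ht Hnt]].
  assert (Hd1 := P1 (beta t) (ex_intro _ t (conj Ht eq_refl))).
  unfold kappa_nbhd in *. rewrite Hnb by auto. rewrite Hnt in Hd1.
  apply Rle_trans with (d (b s) (beta t)).
  { apply dist_le; auto. exists t; auto. }
  apply Rnot_lt_le. intros Hlt.
  set (eps := (d (b s) (beta t) - 2 * mb q Q * kappa s) / 4).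
  assert (He : eps > 0) by (unfold eps; lra).
  destruct (dist_approx d Hmet (ray_image b) (beta t) o eps Hb0 He) as [z [[u [Hu ->]] Hz]].
  pose proof (nrm_diff d Hmet o (beta t) (b u)) as Hnd.
  rewrite Hnt, Hnb in Hnd by auto.
  destruct Hmet as [_ [_ [Hsym Htri]]].
  pose proof (Htri (b s) (b u) (beta t)) as Htr.
  rewrite (proj2 Hb s u Hs Hu) in Htr. rewrite (Hsym (b u) (beta t)) in Htr.
  unfold eps in Hz. lra.
Qed.
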